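(* Let $p$ and $b$ be distinct primes and $a$ a positive integer with $b\mid p^a-1$. Then $$g\Big(\tfrac{p^{ab}-1}{b(p^a-1)},\,p^{ab}\Big)=b.$$ If moreover $p$ and $b$ are both odd, then $$g\Big(\tfrac{2(p^{ab}-1)}{b(p^a-1)},\,p^{ab}\Big)=2b.$$
   Context: For a prime power $q$ and a positive integer $k$, the Waring number $g(k,q)$ is the smallest $s$ (if it exists) such that every element of $\mathbb{F}_q$ is a sum of $s$ $k$-th powers of elements of $\mathbb{F}_q$. *)

(* Defs.v *)
From HB Require Import structures.
From mathcomp Require Import all_boot all_order all_algebra all_field.
Set Implicit Arguments. Unset Strict Implicit. Unset Printing Implicit Defensive.
Import GRing.Theory.
Local Open Scope ring_scope.

Definition sum_of_kth_powers (F : finFieldType) (k s : nat) (x : F) : Prop :=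
  exists t : s.-tuple F, x = \sum_(i < s) (tnth t i) ^+ k.

Definition waring_ok (F : finFieldType) (k s : nat) : Prop :=
  forall x : F, sum_of_kth_powers k s x.

Definition is_waring_number (F : finFieldType) (k s : nat) : Prop :=
  waring_ok F k s /\ (forall s', (s' < s)%N -> ~ waring_ok F k s').

(* Main.v *)
Require Import Defs.
From HB Require Import structures.
From mathcomp Require Import all_boot all_order all_algebra all_field.
From mathcomp Require Import zify.
Set Implicit Arguments. Unset Strict Implicit. Unset Printing Implicit Defensive.
Import GRing.Theory.
Local Open Scope ring_scope.

Section Indep.
Variable F : fieldType.
Variable Fr : F -> F.
Hypothesis FrD : {morph Fr : x y / x + y}.
Hypothesis FrM : {morph Fr : x y / x * y}.
Hypothesis Fr0 : Fr 0 = 0.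
Hypothesis Fr1 : Fr 1 = 1.

Lemma FrX x n : Fr (x ^+ n) = Fr x ^+ n.
Proof. elim: n => [|n IH]; by rewrite ?expr0 ?Fr1 // !exprS FrM IH. Qed.

Lemma Fr_sum b (c : nat -> F) t :
  (forall j, (j < b)%N -> Fr (c j) = c j) ->
  Fr (\sum_(j < b) c j * t ^+ j) = \sum_(j < b) c j * (Fr t) ^+ j.
Proof.
move=> Hc; rewrite (big_morph Fr FrD Fr0); apply: eq_bigr => j _.
by rewrite FrM FrX Hc.
Qed.

Lemma indep b t w (c : nat -> F) :
  b.-primitive_root w -> Fr w = w -> Fr t = t * w -> t != 0 ->
  (forall j, (j < b)%N -> Fr (c j) = c j) ->
  \sum_(j < b) c j * t ^+ j = 0 -> forall j, (j < b)%N -> c j = 0.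
Proof.
move=> pw Frw Frt t0 Hc Hs.
have Hit i : iter i Fr t = t * w ^+ i.
  elim: i => [|i IH]; first by rewrite expr0 mulr1.
  by rewrite iterS IH FrM Frt FrX Frw -mulrA -exprS.
have Hroot i : \sum_(j < b) c j * (t * w ^+ i) ^+ j = 0.
  rewrite -Hit; elim: i => [|i IH] //=.
  by rewrite -Fr_sum // IH Fr0.
move=> j0 jb; apply/eqP/negPn/negP => cj0.
pose P := \poly_(i < b) c i.
have P0 : P != 0.
  apply/eqP => /(congr1 (fun q : {poly F} => q`_j0)).
  by rewrite coef_poly jb coef0 => /eqP; rewrite (negbTE cj0).
have := max_poly_roots P0 (rs := [seq t * w ^+ i | i <- iota 0 b]).
rewrite size_map size_iota.
have -> : all (root P) [seq t * w ^+ i | i <- iota 0 b].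
  apply/allP => x /mapP [i _ ->]; by rewrite /root horner_poly Hroot.
rewrite map_inj_in_uniq ?iota_uniq.
  by move=> /(_ isT isT); rewrite ltnNge size_poly.
move=> i j; rewrite !mem_iota /= !add0n => ib jb2 /(mulfI t0) /eqP.
by rewrite (eq_prim_root_expr pw) !modn_small // => /eqP.
Qed.
End Indep.
Section NatL.
Local Open Scope nat_scope.
Lemma div_main A b : (1 < b)%N -> (1 < A)%N -> (b %| A - 1)%N -> (b * (A - 1) %| A ^ b - 1)%N.
Proof.
move=> b1 A0 hb.
have A1 : (A %% b = 1)%N.
  have -> : A = (A - 1) + 1 by rewrite subnK // ltnW.
  by rewrite -modnDml (eqP hb) add0n modn_small.
rewrite !subn1 predn_exp mulnC dvdn_pmul2l; last by rewrite -subn1 subn_gt0.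
rewrite /dvdn -modn_summ.
rewrite (eq_bigr (fun _ => 1%N)) => [|i _]; last by rewrite -modnXm A1 exp1n modn_small.
by rewrite sum1_card card_ord modnn.
Qed.
End NatL.


Section Main.
Variables (F : finFieldType) (p a b : nat).
Hypotheses (pp : prime p) (pb : prime b) (a0 : (0 < a)%N) (hb : (b %| p ^ a - 1)%N)
  (cardF : #|F| = (p ^ (a * b))%N).

Let A := (p ^ a)%N.
Let m := (A - 1)%N.
Let k := ((p ^ (a * b) - 1) %/ (b * m))%N.

Lemma A_gt1 : (1 < A)%N.
Proof.
apply: (leq_trans (prime_gt1 pp)); rewrite -{1}(expn1 p); exact: leq_pexp2l (prime_gt0 pp) a0.
Qed.

Lemma m_gt0 : (0 < m)%N.
Proof. by rewrite subn_gt0 A_gt1. Qed.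

Lemma b_gt1 : (1 < b)%N. Proof. exact: prime_gt1. Qed.
Lemma b_gt0 : (0 < b)%N. Proof. exact: prime_gt0. Qed.

Lemma q1E : (#|F|.-1 = k * (b * m))%N.
Proof.
rewrite cardF -subn1 /k divnK // expnM; exact: div_main b_gt1 A_gt1 hb.
Qed.

Lemma k_gt0 : (0 < k)%N.
Proof.
have : (0 < #|F|.-1)%N.
  by rewrite cardF -subn1 subn_gt0 expnM (leq_trans A_gt1) // -{1}(expn1 A) leq_pexp2l ?b_gt0 // ltnW // A_gt1.
by rewrite q1E muln_gt0 => /andP [].
Qed.

Lemma charF : p \in [pchar F].
Proof. exact: card_finPcharP cardF pp. Qed.

Definition Fr (x : F) := x ^+ A.

Lemma FrD_gen e (x y : F) : (x + y) ^+ (p ^ e) = x ^+ (p ^ e) + y ^+ (p ^ e).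
Proof.
elim: e => [|e IH]; first by rewrite !expn0 !expr1.
by rewrite expnSr !exprM IH -!(pFrobenius_autE charF) rmorphD.
Qed.

Lemma FrD : {morph Fr : x y / x + y}.
Proof. by move=> x y; rewrite /Fr FrD_gen. Qed.
Lemma FrM : {morph Fr : x y / x * y}.
Proof. by move=> x y; rewrite /Fr exprMn. Qed.
Lemma Fr0 : Fr 0 = 0.
Proof. by rewrite /Fr expr0n; case: A A_gt1. Qed.
Lemma Fr1 : Fr 1 = 1.
Proof. by rewrite /Fr expr1n. Qed.

Lemma exists_gen : exists g : F, (#|F|.-1).-primitive_root g.
Proof.
have H0 : (0 < #|F|.-1)%N by rewrite q1E !muln_gt0 k_gt0 b_gt0 m_gt0.
have H1 : all (#|F|.-1).-unity_root (enum [set~ (0 : F)]).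
  apply/allP => x; rewrite mem_enum !inE => x0.
  rewrite unity_rootE; apply/eqP; apply: (mulfI x0).
  rewrite -exprS prednK ?expf_card ?mulr1 //.
  by apply/card_gt0P; exists 0.
have H2 : leq #|F|.-1 (size (enum [set~ (0 : F)])) by rewrite -cardE (cardsC1 (0 : F)).
have := cyclic.has_prim_root H0 H1 (enum_uniq _) H2.
case/hasP.
by move=> g _ pg; exists g.
Qed.


Variable g : F.
Hypothesis pg : (#|F|.-1).-primitive_root g.

Definition th := g ^+ k.
Definition eta := g ^+ (k * b).
Definition om := g ^+ (k * m).

Lemma prim_sub d e : #|F|.-1 = (d * e)%N -> (0 < d)%N -> e.-primitive_root (g ^+ d).
Proof.
move=> He d0; have := exp_prim_root pg d.
have -> : gcdn d #|F|.-1 = d by apply/gcdn_idPl; rewrite He dvdn_mulr.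
by rewrite He mulKn.
Qed.

Lemma eta_prim : m.-primitive_root eta.
Proof. by apply: prim_sub; rewrite ?q1E ?mulnA // muln_gt0 k_gt0 b_gt0. Qed.

Lemma om_prim : b.-primitive_root om.
Proof. by apply: prim_sub; rewrite ?q1E ?muln_gt0 ?k_gt0 ?m_gt0 // (mulnC b) mulnA. Qed.

Lemma AE : A = m.+1.
Proof. by rewrite /m subn1 prednK // ltnW // A_gt1. Qed.

Lemma Fr_om : Fr om = om.
Proof.
rewrite /Fr AE exprS.
have -> : om ^+ m = 1 by rewrite /m /A -(divnK hb) mulnC exprM (prim_expr_order om_prim) expr1n.
by rewrite mulr1.
Qed.

Lemma Fr_eta : Fr eta = eta.
Proof. by rewrite /Fr AE exprS (prim_expr_order eta_prim) mulr1. Qed.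

Lemma Fr_th : Fr th = th * om.
Proof. by rewrite /Fr AE /th /om -!exprM -exprD mulnS. Qed.

Lemma g_neq0 : g != 0.
Proof.
apply/eqP => g0; have := prim_expr_order pg; rewrite g0 expr0n.
have : (0 < #|F|.-1)%N by rewrite q1E !muln_gt0 k_gt0 b_gt0 m_gt0.
by case: (#|F|.-1) => // n _ /eqP; rewrite eq_sym oner_eq0.
Qed.

Lemma th_neq0 : th != 0.
Proof. by rewrite expf_neq0 // g_neq0. Qed.

Definition E (i : nat) : F := if i is i'.+1 then eta ^+ i' else 0.

Lemma Fr_E i : Fr (E i) = E i.
Proof. case: i => [|i] /=; first exact: Fr0. by rewrite /Fr -exprM mulnC exprM -/(Fr eta) Fr_eta. Qed.

Lemma eta_neq0 : eta != 0.
Proof. by rewrite expf_neq0 // g_neq0. Qed.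

Lemma E_inj i j : (i < A)%N -> (j < A)%N -> E i = E j -> i = j.
Proof.
rewrite AE; case: i => [|i]; case: j => [|j] //= ilt jlt.
- by move/eqP; rewrite eq_sym expf_eq0 (negbTE eta_neq0) andbF.
- by move/eqP; rewrite expf_eq0 (negbTE eta_neq0) andbF.
move/eqP; rewrite (eq_prim_root_expr eta_prim) !modn_small // => /eqP -> //.
Qed.


Lemma Fr_sumK I (r : seq I) (P : pred I) (c : I -> F) :
  (forall i, Fr (c i) = c i) -> Fr (\sum_(i <- r | P i) c i) = \sum_(i <- r | P i) c i.
Proof.
move=> Hc; rewrite (big_morph Fr FrD Fr0); exact: eq_bigr.
Qed.

Lemma Fr_subK x y : Fr x = x -> Fr y = y -> Fr (x - y) = x - y.
Proof.
move=> hx hy; apply: (addIr y); rewrite -{2}hy -FrD !subrK //.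
Qed.

Lemma indepF t w (c : nat -> F) :
  b.-primitive_root w -> Fr w = w -> Fr t = t * w -> t != 0 ->
  (forall j, (j < b)%N -> Fr (c j) = c j) ->
  \sum_(j < b) c j * t ^+ j = 0 -> forall j, (j < b)%N -> c j = 0.
Proof. exact: (indep FrD FrM Fr0 Fr1). Qed.

Lemma insK n (j0 j : 'I_n) : insubd j0 (val j) = j.
Proof. by apply: val_inj; rewrite val_insubd ltn_ord. Qed.

Lemma surj t w :
  b.-primitive_root w -> Fr w = w -> Fr t = t * w -> t != 0 ->
  forall x : F, exists f : {ffun 'I_b -> 'I_A}, x = \sum_(j < b) E (f j) * t ^+ j.
Proof.
move=> pw Fw Ft t0 x.
pose Phi (f : {ffun 'I_b -> 'I_A}) := \sum_(j < b) E (f j) * t ^+ j.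
have Phi_inj : injective Phi.
  move=> f f' /eqP; rewrite -subr_eq0 /Phi -sumrB => /eqP Hs.
  apply/ffunP => j; apply: val_inj; apply: E_inj; try exact: ltn_ord.
  apply/eqP; rewrite -subr_eq0; apply/eqP.
  pose c i := E (f (insubd j i)) - E (f' (insubd j i)).
  have := indepF pw Fw Ft t0 (c := c) _ _ (ltn_ord j).
  rewrite /c insK; apply.
    by move=> i _; apply: Fr_subK; apply: Fr_E.
  by rewrite -[X in _ = X]Hs; apply: eq_bigr => i _; rewrite /c insK mulrBl.
have H : Phi @: setT = setT.
  apply/eqP; rewrite eqEcard subsetT card_imset // !cardsT card_ffun !card_ord.
  by rewrite /= cardF expnM.
have : x \in Phi @: setT by rewrite H inE.
by case/imsetP => f _ ->; exists f.
Qed.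

Lemma decomp t w s (rho : 'I_s -> 'I_b) (c : 'I_s -> F) d :
  b.-primitive_root w -> Fr w = w -> Fr t = t * w -> t != 0 ->
  (forall i, Fr (c i) = c i) -> Fr d = d ->
  \sum_(j < b) d * t ^+ j = \sum_(i < s) c i * t ^+ rho i ->
  forall j : 'I_b, d = \sum_(i | rho i == j) c i.
Proof.
move=> pw Fw Ft t0 Fc Fd Hs j.
rewrite (partition_big rho xpredT) //= in Hs.
apply/eqP; rewrite -subr_eq0; apply/eqP.
pose cc i := d - \sum_(i0 | rho i0 == insubd j i) c i0.
have := indepF pw Fw Ft t0 (c := cc) _ _ (ltn_ord j).
rewrite /cc insK; apply.
  by move=> i _; apply: Fr_subK => //; apply: Fr_sumK.
have E1 : \sum_(j < b) cc j * t ^+ j =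
  \sum_(j < b) d * t ^+ j - \sum_(j < b) \sum_(i | rho i == j) c i * t ^+ rho i.
  rewrite -sumrB; apply: eq_bigr => i _; rewrite /cc insK mulrBl mulr_suml.
  by congr (_ - _); apply: eq_bigr => i0 /eqP ->.
rewrite E1 Hs subrr //.
Qed.



Lemma pigeon s r (rho : 'I_s -> 'I_b) :
  (s < b * r)%N -> exists j : 'I_b, (#|[pred i | rho i == j]| < r)%N.
Proof.
move=> hs; apply/existsP; rewrite -[X in is_true X]negbK negb_exists; apply/negP => /forallP H.
have : (b * r <= s)%N.
  rewrite -[X in (_ <= X)%N](card_ord s) -sum1_card (partition_big rho xpredT) //=.
  rewrite -{1}[b]card_ord -sum_nat_const; apply: leq_sum => j _.
  rewrite sum1dep_card. have := H j. rewrite -leqNgt => h; apply: (leq_trans h); apply: eq_leq; apply: eq_card => i; by rewrite !inE.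
by rewrite leqNgt hs.
Qed.


Lemma kpow_rep i j : exists y, E i * th ^+ j = y ^+ k.
Proof.
case: i => [|i] /=.
  by exists 0; rewrite mul0r expr0n; case: k k_gt0.
exists (g ^+ (b * i + j)); rewrite /eta /th -!exprM -exprD; congr (g ^+ _).
by rewrite mulnDl -mulnA (mulnC (b * i)) (mulnC j).
Qed.

Lemma kpow_dec y : exists jc : 'I_b * F,
  [/\ Fr jc.2 = jc.2, (jc.2 = 0 \/ exists l, jc.2 = eta ^+ l) & y ^+ k = jc.2 * th ^+ jc.1].
Proof.
have j0 : 'I_b := Ordinal b_gt0.
have [->|y0] := eqVneq y 0.
  exists (j0, 0); split => //=; first exact: Fr0.
  - by left.
  - by rewrite mul0r expr0n; case: k k_gt0.
have Hy : y ^+ #|F|.-1 = 1.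
  apply: (mulfI y0); rewrite -exprS prednK ?expf_card ?mulr1 //.
  by apply/card_gt0P; exists 0.
case: (prim_rootP pg Hy) => i ->.
exists (Ordinal (ltn_pmod i b_gt0), eta ^+ (i %/ b)); split => /=.
- by rewrite /Fr -exprM mulnC exprM -/(Fr eta) Fr_eta.
- by right; exists (i %/ b)%N.
rewrite /eta /th -!exprM -exprD; congr (g ^+ _).
by rewrite [(i * k)%N]mulnC -mulnA -mulnDr (mulnC b) -divn_eq.
Qed.

Lemma part1_ok : waring_ok F k b.
Proof.
move=> x; have [f ->] := surj om_prim Fr_om Fr_th th_neq0 x.
have [Y HY] := fin_all_exists (fun j : 'I_b => kpow_rep (f j) j).
exists [tuple Y j | j < b]; apply: eq_bigr => j _; by rewrite tnth_mktuple HY.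
Qed.

Lemma part1_min s : (s < b)%N -> ~ waring_ok F k s.
Proof.
move=> sb Hw; have [tp Htp] := Hw (\sum_(j < b) 1 * th ^+ j).
have [jc Hjc] := fin_all_exists (fun i : 'I_s => kpow_dec (tnth tp i)).
have Hs : \sum_(j < b) 1 * th ^+ j = \sum_(i < s) (jc i).2 * th ^+ (jc i).1.
  by rewrite Htp; apply: eq_bigr => i _; case: (Hjc i).
have [j Hj] : exists j : 'I_b, (#|[pred i | (jc i).1 == j]| < 1)%N by apply: pigeon; rewrite muln1.
have Fc : forall i, Fr (jc i).2 = (jc i).2 by move=> i; case: (Hjc i).
have := decomp om_prim Fr_om Fr_th th_neq0 Fc Fr1 Hs j.
rewrite big_pred0.
  by move/eqP; rewrite oner_eq0.
move=> i; apply/negbTE/negP => Hi.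
move: Hj; rewrite ltnS leqn0 => /eqP /card0_eq /(_ i).
by rewrite !inE Hi.
Qed.


Lemma cardK : (#|[set x : F | Fr x == x]| <= A)%N.
Proof.
pose P : {poly F} := 'X^A - 'X.
have sP : size P = A.+1.
  by rewrite /P size_polyDl size_polyXn // size_polyN size_polyX ltnS A_gt1.
have P0 : P != 0 by rewrite -size_poly_gt0 sP.
have := max_poly_roots P0 (rs := enum [set x : F | Fr x == x]).
rewrite -cardE sP ltnS; apply; last exact: enum_uniq.
apply/allP => x; rewrite mem_enum inE => /eqP Hx.
by rewrite /root /P !hornerE -/(Fr x) Hx subrr.
Qed.

Hypotheses (op : odd p) (ob : odd b).

Lemma m_even : ~~ odd m.
Proof. by have := congr1 odd AE; rewrite /A oddX op orbT /= => <-. Qed.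

Lemma two_sq i : (i < A)%N ->
  exists i1 i2, [/\ (i1 < A)%N, (i2 < A)%N & E i = E i1 ^+ 2 + E i2 ^+ 2].
Proof.
move=> iA; set c := E i.
pose h (j : 'I_(m./2).+1) := E j ^+ 2.
have h_inj : injective h.
  move=> [x xl] [y yl]; rewrite /h /=; move=> Hxy; apply: val_inj => /=.
  have hm : (m./2 + m./2 = m)%N by rewrite addnn -[RHS]odd_double_half (negbTE m_even).
  case: x xl Hxy => [|x]; case: y yl => [|y] //= xl yl.
  - by rewrite exprS mul0r => /eqP; rewrite eq_sym !expf_eq0 (negbTE g_neq0) !andbF.
  - by rewrite [0 ^+ 2]exprS mul0r => /eqP; rewrite !expf_eq0 (negbTE g_neq0) !andbF.
  move/eqP; rewrite -(exprM eta x 2) -(exprM eta y 2) (eq_prim_root_expr eta_prim) !modn_small.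
  + by rewrite !muln2 => /eqP /double_inj ->.
  + by rewrite ltnS in xl yl; lia.
  + by rewrite ltnS in xl yl; lia.
pose K := [set x : F | Fr x == x].
pose Sq := h @: setT.
pose Sq2 := (fun z => c - z) @: Sq.
have cSq : #|Sq| = (m./2).+1 by rewrite card_imset // cardsT card_ord.
have cSq2 : #|Sq2| = (m./2).+1.
  by rewrite card_imset // => z1 z2 /addrI /oppr_inj.
have hm : (m./2 + m./2 = m)%N by rewrite addnn -[RHS]odd_double_half (negbTE m_even).
have FrSq z : z \in Sq -> Fr z = z.
  by case/imsetP => j _ ->; rewrite /h /Fr -exprM mulnC exprM -/(Fr (E j)) Fr_E.
have sK : Sq :|: Sq2 \subset K.
  rewrite subUset; apply/andP; split; apply/subsetP => z.
    by move/FrSq => Hz; rewrite inE Hz.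
  case/imsetP => z' /FrSq Hz' ->; rewrite inE; apply/eqP; apply: Fr_subK => //; exact: Fr_E.
have := leq_trans (subset_leq_card sK) cardK.
rewrite cardsU cSq cSq2 AE => Hle.
have [z] : exists z, z \in Sq :&: Sq2.
  apply/card_gt0P; rewrite lt0n; apply/negP => /eqP H0.
  by move: Hle; rewrite H0 subn0; lia.
rewrite inE => /andP [/imsetP [j1 _ ->] /imsetP [z2 /imsetP [j2 _ ->] He]].
exists j1, j2; split.
- by rewrite (leq_trans (ltn_ord j1)) // ltnS -{2}hm leq_addl.
- by rewrite (leq_trans (ltn_ord j2)) // ltnS -{2}hm leq_addl.
by rewrite -/(h j1) He subrK.
Qed.


Definition t2 := th ^+ 2.
Definition w2 := om ^+ 2.

Lemma FrXn x n : Fr (x ^+ n) = Fr x ^+ n.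
Proof. by rewrite /Fr -!exprM mulnC. Qed.

Lemma w2_prim : b.-primitive_root w2.
Proof. by rewrite /w2 (prim_root_exp_coprime 2 om_prim) coprime2n. Qed.

Lemma Fr_w2 : Fr w2 = w2.
Proof. by rewrite /w2 FrXn Fr_om. Qed.

Lemma Fr_t2 : Fr t2 = t2 * w2.
Proof. by rewrite /t2 /w2 FrXn Fr_th exprMn. Qed.

Lemma t2_neq0 : t2 != 0.
Proof. by rewrite expf_neq0 // th_neq0. Qed.

Lemma sq_rep i j : exists y, E i ^+ 2 * t2 ^+ j = y ^+ (2 * k).
Proof.
have [y Hy] := kpow_rep i j; exists y.
by rewrite /t2 -exprM mulnC exprM -exprMn Hy -exprM mulnC.
Qed.

Lemma part2_ok : waring_ok F (2 * k) (2 * b).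
Proof.
move=> x; have [f ->] := surj w2_prim Fr_w2 Fr_t2 t2_neq0 x.
have HY : forall j : 'I_b, exists yy : F * F,
    E (f j) * t2 ^+ j = yy.1 ^+ (2 * k) + yy.2 ^+ (2 * k).
  move=> j; have [i1 [i2 [_ _ ->]]] := two_sq (ltn_ord (f j)).
  have [y1 H1] := sq_rep i1 j; have [y2 H2] := sq_rep i2 j.
  by exists (y1, y2); rewrite mulrDl H1 H2.
have [Y HYY] := fin_all_exists HY.
have j0 : 'I_b := Ordinal b_gt0.
pose G i := if (i < b)%N then (Y (insubd j0 i)).1 else (Y (insubd j0 (i - b)%N)).2.
exists [tuple G i | i < 2 * b].
rewrite (eq_bigr (fun i : 'I_(2 * b) => G i ^+ (2 * k))); last by move=> i _; rewrite tnth_mktuple.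
rewrite -(big_mkord xpredT (fun i => G i ^+ (2 * k))).
rewrite (big_cat_nat (n := b)) //=; last by rewrite leq_pmull.
have -> : \sum_(b <= i < 2 * b) G i ^+ (2 * k) = \sum_(0 <= i < b) G (i + b)%N ^+ (2 * k).
  rewrite -{1}[b]add0n big_addn mul2n -addnn addnK; reflexivity.
rewrite !big_mkord -big_split /=; apply: eq_bigr => j _.
rewrite HYY /G ltn_ord addnK ifF ?insK //.
by apply/negbTE; rewrite -leqNgt leq_addl.
Qed.

Lemma part2_min s : (s < 2 * b)%N -> ~ waring_ok F (2 * k) s.
Proof.
move=> sb Hw; have [tp Htp] := Hw (\sum_(j < b) eta * t2 ^+ j).
have [jc Hjc] := fin_all_exists (fun i : 'I_s => kpow_dec (tnth tp i)).
have Hs : \sum_(j < b) eta * t2 ^+ j = \sum_(i < s) (jc i).2 ^+ 2 * t2 ^+ (jc i).1.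
  rewrite Htp; apply: eq_bigr => i _; case: (Hjc i) => _ _ H.
  by rewrite mulnC exprM H exprMn /t2 -!exprM [(_ * 2)%N]mulnC.
have [j Hj] : exists j : 'I_b, (#|[pred i | (jc i).1 == j]| < 2)%N by apply: pigeon; rewrite mulnC.
have Fc : forall i, Fr ((jc i).2 ^+ 2) = (jc i).2 ^+ 2.
  by move=> i; case: (Hjc i) => H _ _; rewrite FrXn H.
have := decomp w2_prim Fr_w2 Fr_t2 t2_neq0 Fc Fr_eta Hs j.
have m1 : (1 < m)%N.
  have := m_gt0; have := m_even; case: m => [|[|n]] //.
case: (pickP (fun i => (jc i).1 == j)) => [i0 Hi0 | Hn].
  rewrite (big_pred1 i0); last first.
    by move: Hj; rewrite ltnS => /card_le1P /(_ i0); rewrite inE => /(_ Hi0).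
  case: (Hjc i0) => _ [->|[l ->]] _.
    by rewrite exprS mul0r => /eqP; rewrite (negbTE eta_neq0).
  rewrite -exprM => /eqP; rewrite -{1}(expr1 eta) (eq_prim_root_expr eta_prim) (modn_small m1).
  move/eqP => /(congr1 odd); rewrite odd_mod ?(negbTE m_even) // oddM /= andbF //.
by rewrite big_pred0 // => /eqP; rewrite (negbTE eta_neq0).
Qed.

End Main.

Theorem mainTheorem7 (p b a : nat) :
  prime p -> prime b -> p <> b -> (0 < a)%N -> (b %| p ^ a - 1)%N ->
  (forall F : finFieldType, #|F| = (p ^ (a * b))%N ->
     is_waring_number F ((p ^ (a * b) - 1) %/ (b * (p ^ a - 1))) b)
  /\
  (odd p -> odd b ->
   forall F : finFieldType, #|F| = (p ^ (a * b))%N ->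
     is_waring_number F (2 * (p ^ (a * b) - 1) %/ (b * (p ^ a - 1))) (2 * b)).
Proof.
move=> pp pb _ a0 hb; split.
  move=> F cardF; have [g pg] := exists_gen pp pb a0 hb cardF.
  split; first exact: (part1_ok pp pb a0 hb cardF pg).
  by move=> s hs; apply: (part1_min pp pb a0 hb cardF pg hs).
move=> op ob F cardF; have [g pg] := exists_gen pp pb a0 hb cardF.
have hd : (b * (p ^ a - 1) %| p ^ (a * b) - 1)%N.
  rewrite expnM; apply: div_main (prime_gt1 pb) _ hb.
  apply: (leq_trans (prime_gt1 pp)); rewrite -{1}(expn1 p); exact: leq_pexp2l (prime_gt0 pp) a0.
rewrite -muln_divA //.
split; first exact: (part2_ok pp pb a0 hb cardF pg op ob).
by move=> s hs; apply: (part2_min pp pb a0 hb cardF pg op ob hs).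
Qed.
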